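(* Let $k$ be a field of characteristic zero, $R=k[[x_1,\dots,x_n]]$, and let $K\hookrightarrow L$ be a field extension where $K$ is an $R$-algebra (and $L$ is regarded as an $R$-algebra via $K$). Then there is an exact sequence $$0\to\Omega'_{K/k}\otimes_KL\to\Omega'_{L/k}\to\Omega_{L/K}\to0.$$
   Context: For an $R$-algebra $A$, $\Omega'_{A/k}$ denotes the module of special differentials: the $A$-module representing special $k$-derivations, i.e. $k$-derivations $D\colon A\to M$ with $D(f)=\sum_i\frac{\partial f}{\partial x_i}D(x_i)$ for all $f\in R$. $\Omega_{L/K}$ is the usual module of Kähler differentials. The first map sends $d'_{K/k}(f)\otimes1$ to $d'_{L/k}(f)$ and the second sends $d'_{L/k}(f)$ to $d_{L/K}(f)$. *)

(* Defs.v *)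
From HB Require Import structures.
From mathcomp Require Import all_boot all_order all_algebra.
Set Implicit Arguments. Unset Strict Implicit. Unset Printing Implicit Defensive.
Import Order.TTheory GRing.Theory.
Local Open Scope ring_scope.

(* A monomial exponent (multi-index) is a function 'I_n -> nat;
   a formal power series is its (arbitrary) coefficient function. *)
Definition mono (n : nat) := 'I_n -> nat.
Definition ps (k : fieldType) (n : nat) := mono n -> k.

Section PS.
Variables (k : fieldType) (n : nat).

Definition psC (c : k) : ps k n :=
  fun m => if [forall j, m j == 0%N] then c else 0.
Definition ps1 : ps k n := psC 1.
Definition psadd (f g : ps k n) : ps k n := fun m => f m + g m.
(* Cauchy product: (fg)_m = sum_{a <= m} f_a g_{m-a}. *)
Definition psmul (f g : ps k n) : ps k n := fun m =>
  \sum_(a : {ffun 'I_n -> 'I_(\max_(i < n) m i).+1} | [forall i, (a i <= m i)%N])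
     f (fun i => nat_of_ord (a i)) * g (fun i => (m i - a i)%N).
Definition psX (i : 'I_n) : ps k n :=
  fun m => if [forall j, m j == (j == i) :> nat] then 1 else 0.
Definition psd (i : 'I_n) (f : ps k n) : ps k n :=
  fun m => (m i).+1%:R * f (fun j => (m j + (j == i))%N).

(* phi : R -> A is a (unital) ring homomorphism, i.e. A is an R-algebra. *)
Definition ps_alg_map (A : nzRingType) (phi : ps k n -> A) :=
  [/\ forall f g, phi (psadd f g) = phi f + phi g,
      forall f g, phi (psmul f g) = phi f * phi g &
      phi ps1 = 1].

Definition special_der (A : comNzRingType) (phi : ps k n -> A)
  (M : lmodType A) (D : A -> M) :=
  [/\ forall x y, D (x + y) = D x + D y,
      forall x y, D (x * y) = x *: D y + y *: D x,
      forall c, D (phi (psC c)) = 0 &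
      forall f, D (phi f) = \sum_(i < n) phi (psd i f) *: D (phi (psX i))].

End PS.

Definition islin (A : nzRingType) (U V : lmodType A) (h : U -> V) :=
  forall a u v, h (a *: u + v) = a *: h u + h v.

(* (Om, d) represents special k-derivations of A: the module Omega'_{A/k}. *)
Definition special_universal (k : fieldType) (n : nat) (A : comNzRingType)
  (phi : ps k n -> A) (Om : lmodType A) (d : A -> Om) :=
  special_der phi d /\
  forall (M : lmodType A) (D : A -> M), special_der phi D ->
    exists h : Om -> M, [/\ islin h, forall x, h (d x) = D x &
      forall h' : Om -> M, islin h' -> (forall x, h' (d x) = D x) -> h' =1 h].

Definition kahler_der (K L : fieldType) (iota : {rmorphism K -> L})
  (M : lmodType L) (D : L -> M) :=
  [/\ forall x y, D (x + y) = D x + D y,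
      forall x y, D (x * y) = x *: D y + y *: D x &
      forall a, D (iota a) = 0].

(* (Om, d) is the module of Kaehler differentials Omega_{L/K}. *)
Definition kahler_universal (K L : fieldType) (iota : {rmorphism K -> L})
  (Om : lmodType L) (d : L -> Om) :=
  kahler_der iota d /\
  forall (M : lmodType L) (D : L -> M), kahler_der iota D ->
    exists h : Om -> M, [/\ islin h, forall x, h (d x) = D x &
      forall h' : Om -> M, islin h' -> (forall x, h' (d x) = D x) -> h' =1 h].

Definition semilin (K L : fieldType) (iota : {rmorphism K -> L})
  (U : lmodType K) (V : lmodType L) (g : U -> V) :=
  forall a u v, g (a *: u + v) = iota a *: g u + g v.

(* (T, j) is the base change U (x)_K L, with j u = u (x) 1. *)
Definition base_change (K L : fieldType) (iota : {rmorphism K -> L})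
  (U : lmodType K) (T : lmodType L) (j : U -> T) :=
  semilin iota j /\
  forall (M : lmodType L) (g : U -> M), semilin iota g ->
    exists h : T -> M, [/\ islin h, forall u, h (j u) = g u &
      forall h' : T -> M, islin h' -> (forall u, h' (j u) = g u) -> h' =1 h].

(* Main.v *)
Require Import Defs.
From HB Require Import structures.
From mathcomp Require Import all_boot all_order all_algebra.
Import GRing.Theory.
Local Open Scope ring_scope.
From mathcomp Require Import zify.
From mathcomp Require boolp classical_sets.
From Stdlib Require Import Classical ClassicalEpsilon FunctionalExtensionality.
Set Implicit Arguments. Unset Strict Implicit. Unset Printing Implicit Defensive.


Definition dual (L : fieldType) (M : lmodType L) : Type := (L * M)%type.
HB.instance Definition _ (L : fieldType) (M : lmodType L) := GRing.Zmodule.on (dual M).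

Section Dual.
Variables (L : fieldType) (M : lmodType L).
Definition dmul (a b : dual M) : dual M := (a.1 * b.1, a.1 *: b.2 + b.1 *: a.2).
Definition done_ : dual M := (1, 0).
Lemma dmulA : associative dmul.
Proof. move=> [a u] [b v] [c w]; rewrite /dmul /=; congr pair; first by rewrite mulrA.
by rewrite !scalerDr !scalerA -addrA [c * a]mulrC [c * b]mulrC. Qed.
Lemma dmulC : commutative dmul.
Proof. move=> [a u] [b v]; rewrite /dmul /=; congr pair; [exact: mulrC | exact: addrC]. Qed.
Lemma dmul1 : left_id done_ dmul.
Proof. move=> [a u]; rewrite /dmul /= mul1r scale1r scaler0 addr0 //. Qed.
Lemma dmulDl : left_distributive dmul +%R.
Proof. move=> [a u] [b v] [c w]; rewrite /dmul /=; congr pair; first by rewrite mulrDl.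
by rewrite scalerDl scalerDr addrACA. Qed.
Lemma done__neq0 : done_ != 0.
Proof. apply/negP=> /eqP [] /eqP; rewrite oner_eq0. done. Qed.
End Dual.

HB.instance Definition _ (L : fieldType) (M : lmodType L) :=
  GRing.Zmodule_isComNzRing.Build (dual M) (@dmulA L M) (@dmulC L M) (@dmul1 L M) (@dmulDl L M) (@done__neq0 L M).

Section Dual2.
Variables (L : fieldType) (M : lmodType L).
Lemma dmulE (a b : dual M) : a * b = (a.1 * b.1, a.1 *: b.2 + b.1 *: a.2). Proof. by []. Qed.
Lemma done_E : (1 : dual M) = (1, 0). Proof. by []. Qed.
Definition dfst (a : dual M) : L := a.1.
Lemma dfst_is_mono : monoid_morphism dfst. Proof. by split. Qed.
Lemma dfst_is_add : zmod_morphism dfst. Proof. by []. Qed.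
HB.instance Definition _ := GRing.isZmodMorphism.Build (dual M) L dfst dfst_is_add.
HB.instance Definition _ := GRing.isMonoidMorphism.Build (dual M) L dfst dfst_is_mono.
Check (dfst : {rmorphism dual M -> L}).
End Dual2.

Lemma ex_min_size (T : Type) (f : T -> nat) (Q : T -> Prop) :
  (exists t, Q t) -> exists t, Q t /\ forall s, Q s -> (f t <= f s)%N.
Proof.
move=> [t0 Qt0]; apply: NNPP => H.
have H' : forall t, Q t -> exists s, Q s /\ (f s < f t)%N.
  move=> t Qt; apply: NNPP => Hn; apply: H; exists t; split=> // s Qs.
  rewrite leqNgt; apply/negP => lt; apply: Hn; by exists s.
suff: forall n s, (f s < n)%N -> ~ Q s by move/(_ (f t0).+1 t0 (ltnSn _)).
elim=> [//|n IH] s; rewrite ltnS => le Qs.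
have [s' [Qs' lt]] := H' s Qs; apply: (IH s') => //; exact: leq_trans lt le.
Qed.

Lemma natl1 a b j : (a <= b)%N -> (b <= j)%N -> (a <= j - (b - a))%N.
Proof. lia. Qed.

Section Ext.
Variables (K L : fieldType) (iota : {rmorphism K -> L}) (M : lmodType L) (D : K -> M).
Local Notation df := (@dfst L M).
Hypothesis charL : forall m, (0 < m)%N -> m%:R != 0 :> L.
Hypothesis DD : forall x y, D (x + y) = D x + D y.
Hypothesis DM : forall x y, D (x * y) = iota x *: D y + iota y *: D x.

Lemma D0 : D 0 = 0.
Proof. by apply/eqP; rewrite -(addrI (D 0) (_ : D 0 + D 0 = D 0 + 0)) // addr0 -DD addr0. Qed.
Lemma D1 : D 1 = 0.
Proof.
have := DM 1 1; rewrite mulr1 rmorph1 scale1r => h.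
by apply: (addrI (D 1)); rewrite addr0 -{1}h.
Qed.

Definition Good (G : dual M -> Prop) :=
  [/\ forall a b, G a -> G b -> a.1 = b.1 -> a = b,
      forall a b, G a -> G b -> G (a + b),
      forall a b, G a -> G b -> G (a * b),
      forall a, G a -> G (- a) &
      forall a, G (iota a, D a)].

Definition overG (G : dual M -> Prop) (Q : {poly dual M}) := forall i, G Q`_i.

Section Step.
Variable G : dual M -> Prop.
Hypothesis GG : Good G.

Lemma G0 : G 0.
Proof. by case: GG => _ _ _ _ h; have := h 0; rewrite rmorph0 D0. Qed.
Lemma G1 : G 1.
Proof. by case: GG => _ _ _ _ h; have := h 1; rewrite rmorph1 D1. Qed.
Lemma GD a b : G a -> G b -> G (a + b). Proof. by case: GG => _ h _ _ _; exact: h. Qed.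
Lemma GM a b : G a -> G b -> G (a * b). Proof. by case: GG => _ _ h _ _; exact: h. Qed.
Lemma GN a : G a -> G (- a). Proof. by case: GG => _ _ _ h _; exact: h. Qed.
Lemma Gfun a b : G a -> G b -> a.1 = b.1 -> a = b. Proof. by case: GG => h _ _ _ _; exact: h. Qed.

Lemma Gsum (I : Type) (r : seq I) (P : pred I) (F : I -> dual M) :
  (forall i, P i -> G (F i)) -> G (\sum_(i <- r | P i) F i).
Proof. move=> h; apply: (big_ind G) => //; [exact: G0 | exact: GD]. Qed.
Lemma Gnat a n : G a -> G (a *+ n).
Proof. by move=> Ga; elim: n => [|n IH]; [rewrite mulr0n; exact: G0 | rewrite mulrS; exact: GD]. Qed.

Lemma overD P Q : overG G P -> overG G Q -> overG G (P + Q).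
Proof. by move=> hP hQ i; rewrite coefD; exact: GD. Qed.
Lemma overN P : overG G P -> overG G (- P).
Proof. by move=> hP i; rewrite coefN; exact: GN. Qed.
Lemma overB P Q : overG G P -> overG G Q -> overG G (P - Q).
Proof. by move=> hP hQ; apply: overD => //; exact: overN. Qed.
Lemma overM P Q : overG G P -> overG G Q -> overG G (P * Q).
Proof. by move=> hP hQ i; rewrite coefM; apply: Gsum => j _; exact: GM. Qed.
Lemma overC c : G c -> overG G c%:P.
Proof. by move=> hc i; rewrite coefC; case: (i == 0)%N => //; exact: G0. Qed.
Lemma overX : overG G 'X.
Proof. by move=> i; rewrite coefX; case: (i == 1)%N; [exact: G1 | exact: G0]. Qed.
Lemma overXn d : overG G 'X^d.
Proof. by move=> i; rewrite coefXn; case: (i == d)%N; [exact: G1 | exact: G0]. Qed.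
Lemma overDer P : overG G P -> overG G P^`().
Proof. by move=> hP i; rewrite coef_deriv; exact: Gnat. Qed.

Lemma lead1_neq0 Q : overG G Q -> Q != 0 -> (lead_coef Q).1 != 0.
Proof.
move=> hQ Q0; apply/negP => /eqP h.
have := Gfun (hQ (size Q).-1) G0; rewrite -lead_coefE h => /(_ erefl) /eqP.
by rewrite lead_coef_eq0 (negbTE Q0).
Qed.
End Step.

Lemma taylor (Q : {poly dual M}) y f :
  Q.[(y, f)] = Q.[(y, 0)] + (0, (map_poly df Q)^`().[y] *: f).
Proof.
elim/poly_ind: Q => [|Q c IH]; first by rewrite !horner0 rmorph0 deriv0 horner0 scale0r add0r.
rewrite !hornerE IH rmorphD rmorphM /= map_polyX map_polyC /= derivD derivC addr0.
rewrite derivM derivX mulr1 !hornerE /=.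
set A := Q.[(y, 0)].
have hA : A.1 = (map_poly df Q).[y].
  by rewrite /A -(horner_map df) /=.
rewrite !dmulE /= -hA -addrA [c + _]addrC addrA; congr (_ + _).
apply: injective_projections => /=; first by rewrite !addr0.
rewrite addr0 scaler0 add0r scalerDr scalerDl scalerA [y * _]mulrC.
by rewrite addrCA [_ + A.1 *: f]addrC.
Qed.

Section Step2.
Variable G : dual M -> Prop.
Hypothesis GG : Good G.
Variable x : L.

Lemma choose_e : exists e, forall Q, overG G Q -> (map_poly df Q).[x] = 0 -> Q.[(x,e)] = 0.
Proof.
case: (classic (exists P, overG G P /\ (map_poly df P).[x] = 0 /\ P != 0)) => [hex|hno]; last first.
  exists 0 => Q hQ hx; case: (eqVneq Q 0) => [->|nz]; first by rewrite horner0.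
  by exfalso; apply: hno; exists Q.
have [P [[hP [hPx P0]] Pmin]] := ex_min_size (fun P : {poly dual M} => size P) hex.
set p := map_poly df P.
have lp1 := lead1_neq0 GG hP P0.
have sp : size p = size P by apply: size_map_poly_id0.
have sP2 : (1 < size P)%N.
  rewrite ltnNge; apply/negP => /size1_polyC hc.
  move: hPx lp1; rewrite /p hc map_polyC hornerC lead_coefC => h.
  by rewrite -[(_`_0).1]/(df _) h eqxx.
have dp0 : p^`().[x] != 0.
  apply/negP=> /eqP h.
  have hD : overG G P^`() := overDer GG hP.
  case: (eqVneq P^`() 0) => [D0'|DP0].
    have hpp : p^`() = 0 by rewrite /p deriv_map D0' rmorph0.
    have := congr1 (fun r : {poly L} => r`_((size p).-2)) hpp; rewrite /= coef_deriv coef0.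
    have -> : (size p).-2.+1 = (size p).-1 by rewrite sp; case: (size P) sP2 => [|[|k]].
    rewrite -lead_coefE -mulr_natr => /eqP; rewrite mulf_eq0 lead_coef_eq0 -size_poly_eq0 sp.
    have c0 : ((size P).-1)%:R != 0 :> L by apply: charL; case: (size P) sP2 => [|[|k]].
    rewrite (negbTE c0) orbF; case: (size P) sP2 => //.
  have hDx : (map_poly df P^`()).[x] = 0 by rewrite -deriv_map.
  have := Pmin P^`() (conj hD (conj hDx DP0)).
  by rewrite leqNgt lt_size_deriv.
set e := - ((p^`().[x])^-1 *: (P.[(x,0)]).2).
have Pxi : P.[(x,e)] = 0.
  rewrite taylor -/p /e scalerN scalerA mulrV ?unitfE // scale1r.
  have h1 : (P.[(x,0)]).1 = 0 by rewrite -hPx /p -(horner_map df).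
  apply: injective_projections => /=; first by rewrite h1 addr0.
  by rewrite subrr.
exists e.
suff: forall n (Q : {poly dual M}), (size Q <= n)%N -> overG G Q -> (map_poly df Q).[x] = 0 -> Q.[(x,e)] = 0.
  by move=> h Q; exact: h _ Q (leqnn _).
elim=> [|n IH] Q sQ hQ hQx.
  by move: sQ; rewrite leqn0 size_poly_eq0 => /eqP ->; rewrite horner0.
case: (eqVneq Q 0) => [->|Q0]; first by rewrite horner0.
have sPQ : (size P <= size Q)%N := Pmin Q (conj hQ (conj hQx Q0)).
set d := (size Q - size P)%N.
set lq := lead_coef Q; set lp := lead_coef P.
set R := lp%:P * Q - lq%:P * 'X^d * P.
have hR : overG G R.
  apply: (overB GG).
    by apply: (overM GG) => //; apply: (overC GG); exact: hP.
  apply: (overM GG) => //; apply: (overM GG); [apply: (overC GG); exact: hQ | exact: overXn].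
have hRx : (map_poly df R).[x] = 0.
  rewrite /R rmorphB !rmorphM /= !map_polyC map_polyXn /=.
  by rewrite hornerD hornerN !hornerM hQx -/p hPx !mulr0 subrr.
have sR : (size R <= n)%N.
  apply: (@leq_trans (size Q).-1); last by move: sQ; case: (size Q).
  apply/leq_sizeP => j hj.
  rewrite coefB coefCM -mulrA coefCM coefXnM.
  have sP1 : (0 < size P)%N by case: (size P) sP2.
  rewrite ltnNge (_ : (d <= j)%N); last by move: hj; rewrite /d; lia.
  case: (eqVneq j (size Q).-1) => [->|ne].
    rewrite (_ : ((size Q).-1 - d)%N = (size P).-1); last by rewrite /d; lia.
    by rewrite -!lead_coefE -/lq -/lp mulrC subrr.
  have hj' : (size Q <= j)%N.
    by move: hj ne; case: (size Q) => [|k] /=; [move=> _ _; exact: leq0n | rewrite ltn_neqAle eq_sym => -> ->].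
  rewrite !nth_default ?mulr0 ?subr0 //; rewrite /d; exact: natl1 sPQ hj'.
have := IH R sR hR hRx.
rewrite /R hornerD hornerN !hornerM Pxi mulr0 subr0 hornerC => h.
set z := Q.[(x,e)] in h *.
have z1 : z.1 = 0 by rewrite -hQx -(horner_map df).
have z2 : z.2 = 0.
  move: (congr1 snd h); rewrite dmulE /= z1 scale0r addr0 => /eqP.
  by rewrite scaler_eq0 (negbTE lp1) /= => /eqP.
by apply: injective_projections.
Qed.

Lemma hmap (Q : {poly dual M}) e : (map_poly df Q).[x] = (Q.[(x,e)]).1.
Proof. by rewrite -[x]/(df (x, e)) horner_map. Qed.

Lemma extend : exists G', [/\ Good G', forall z, G z -> G' z & exists e, G' (x, e)].
Proof.
have [e he] := choose_e.
pose G' z := exists Q, overG G Q /\ Q.[(x,e)] = z.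
have GC z : G z -> G' z by move=> Gz; exists z%:P; split; [exact: overC | exact: hornerC].
exists G'; split => //; last first.
  by exists e; exists 'X; split; [exact: overX | exact: hornerX].
split.
- move=> a b [Q1 [h1 <-]] [Q2 [h2 <-]] e1.
  apply/eqP; rewrite -subr_eq0 -hornerN -hornerD; apply/eqP; apply: he.
    by apply: (overB GG).
  by rewrite (hmap _ e) hornerD hornerN /= e1 subrr.
- move=> a b [Q1 [h1 <-]] [Q2 [h2 <-]]; exists (Q1 + Q2); split; [exact: (overD GG) | exact: hornerD].
- move=> a b [Q1 [h1 <-]] [Q2 [h2 <-]]; exists (Q1 * Q2); split; [exact: (overM GG) | exact: hornerM].
- move=> a [Q1 [h1 <-]]; exists (- Q1); split; [exact: (overN GG) | exact: hornerN].
- by move=> a; apply: GC; case: GG.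
Qed.
End Step2.
End Ext.
Module ZornPart.
Import boolp classical_sets.
Local Open Scope classical_set_scope.

Section Zorn.
Variables (K L : fieldType) (iota : {rmorphism K -> L}) (M : lmodType L) (D : K -> M).
Hypothesis charL : forall m, (0 < m)%N -> m%:R != 0 :> L.
Hypothesis DD : forall x y, D (x + y) = D x + D y.
Hypothesis DM : forall x y, D (x * y) = iota x *: D y + iota y *: D x.

Definition Good' (G : set (dual M)) :=
  [/\ forall a b, G a -> G b -> a.1 = b.1 -> a = b,
      forall a b, G a -> G b -> G (a + b),
      forall a b, G a -> G b -> G (a * b),
      forall a, G a -> G (- a) &
      (exists z, G z) -> forall a, G (iota a, D a)].

Lemma Good'_Good G : Good' G -> (exists z, G z) -> Good iota D G.
Proof. by case=> h1 h2 h3 h4 h5 ne; split => //; exact: h5. Qed.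
Lemma Good_Good' G : Good iota D G -> Good' G.
Proof. by case=> h1 h2 h3 h4 h5; split. Qed.

Lemma base_good : Good iota D (fun z => exists a, z = (iota a, D a)).
Proof.
split.
- by move=> _ _ [a ->] [b ->] /= /fmorph_inj ->.
- by move=> _ _ [a ->] [b ->]; exists (a + b); rewrite rmorphD DD.
- by move=> _ _ [a ->] [b ->]; exists (a * b); rewrite rmorphM DM dmulE.
- move=> _ [a ->]; exists (- a); rewrite rmorphN; congr pair.
  by apply/eqP; rewrite -subr_eq0 /= -opprD -DD subrr (D0 DD) oppr0.
- by move=> a; exists a.
Qed.

Lemma chain_good (F : set (set (dual M))) :
  F `<=` Good' -> total_on F subset -> Good' (\bigcup_(X in F) X).
Proof.
move=> FG tot.
have two a b : (\bigcup_(X in F) X) a -> (\bigcup_(X in F) X) b ->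
    exists Y, [/\ F Y, Y a & Y b].
  move=> [X1 F1 a1] [X2 F2 b2]; case: (tot _ _ F1 F2) => s.
    by exists X2; split => //; exact: s.
  by exists X1; split => //; exact: s.
split.
- move=> a b ha hb; have [Y [FY Ya Yb]] := two _ _ ha hb.
  by case: (FG _ FY) => h _ _ _ _; exact: h.
- move=> a b ha hb; have [Y [FY Ya Yb]] := two _ _ ha hb.
  by exists Y => //; case: (FG _ FY) => _ h _ _ _; exact: h.
- move=> a b ha hb; have [Y [FY Ya Yb]] := two _ _ ha hb.
  by exists Y => //; case: (FG _ FY) => _ _ h _ _; exact: h.
- move=> a [Y FY Ya].
  by exists Y => //; case: (FG _ FY) => _ _ _ h _; exact: h.
- move=> [z [Y FY Yz]] a.
  by exists Y => //; case: (FG _ FY) => _ _ _ _ h; apply: h; exists z.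
Qed.

Theorem derivation_extends : exists E : L -> M,
  [/\ forall x y, E (x + y) = E x + E y,
      forall x y, E (x * y) = x *: E y + y *: E x &
      forall a, E (iota a) = D a].
Proof.
have [A [GA Amax]] := Zorn_bigcup chain_good.
have Ane : exists z, A z.
  apply: NNPP => hne; apply: (Amax _ _ (Good_Good' base_good)); split.
    by move=> z Az; exfalso; apply: hne; exists z.
  by move=> h; apply: hne; exists (iota 0, D 0); apply: h; exists 0.
have GA' := Good'_Good GA Ane.
have tot y : exists m, A (y, m).
  apply: NNPP => hy.
  have [G' [GG' AG' [e Ge]]] := extend charL DD DM GA' y.
  apply: (Amax G' _ (Good_Good' GG')); split => // h.
  by apply: hy; exists e; apply: h.
pose E y := proj1_sig (ClassicalEpsilon.constructive_indefinite_description _ (tot y)).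
have EA y : A (y, E y) by rewrite /E; case: ClassicalEpsilon.constructive_indefinite_description.
case: GA' => fn hD hM _ hI.
have key y m : A (y, m) -> E y = m.
  by move=> h; have := fn _ _ (EA y) h erefl; case.
exists E; split.
- by move=> x y; apply: key; exact: hD (EA x) (EA y).
- by move=> x y; apply: key; have := hM _ _ (EA x) (EA y); rewrite dmulE.
- by move=> a; apply: key.
Qed.
End Zorn.

End ZornPart.
Import ZornPart.

Definition restr (K L : fieldType) (iota : {rmorphism K -> L}) (V : lmodType L) : Type := V.
HB.instance Definition _ (K L : fieldType) (iota : {rmorphism K -> L}) (V : lmodType L) := GRing.Zmodule.on (@restr K L iota V).
Section Restr.
Variables (K L : fieldType) (iota : {rmorphism K -> L}) (V : lmodType L).
Definition rscale (a : K) (v : restr iota V) : restr iota V := (iota a *: (v : V)).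
Lemma rscaleA a b v : rscale a (rscale b v) = rscale (a * b) v.
Proof. by rewrite /rscale scalerA rmorphM. Qed.
Lemma rscale1 : left_id 1 rscale.
Proof. by move=> v; rewrite /rscale rmorph1 scale1r. Qed.
Lemma rscaleDr : right_distributive rscale +%R.
Proof. by move=> a u v; rewrite /rscale scalerDr. Qed.
Lemma rscaleDl v : {morph rscale^~ v: a b / a + b}.
Proof. by move=> a b; rewrite /rscale rmorphD scalerDl. Qed.
End Restr.
HB.instance Definition _ (K L : fieldType) (iota : {rmorphism K -> L}) (V : lmodType L) := GRing.Zmodule_isLmodule.Build K (@restr K L iota V)
  (@rscaleA K L iota V) (@rscale1 K L iota V) (@rscaleDr K L iota V) (@rscaleDl K L iota V).

Lemma restr_scaleE (K L : fieldType) (iota : {rmorphism K -> L}) (V : lmodType L) a (v : restr iota V) :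
  a *: v = (iota a *: (v : V) : restr iota V).
Proof. by []. Qed.

Section PSlem.
Variables (k : fieldType) (n : nat).
Lemma psC_add a b : @psC k n (a + b) = psadd (@psC k n a) (@psC k n b).
Proof.
apply: functional_extensionality => m; rewrite /psadd /psC.
by case: [forall j, m j == 0%N]; rewrite ?addr0.
Qed.
Lemma psC_mul a b : psmul (@psC k n a) (@psC k n b) = @psC k n (a * b).
Proof.
apply: functional_extensionality => m; rewrite /psmul /psC.
case: (boolP [forall j, m j == 0%N]) => [/forallP m0|mn0].
  pose a0 : {ffun 'I_n -> 'I_(\max_(i < n) m i).+1} := [ffun _ => ord0].
  rewrite (bigD1 a0); last by apply/forallP => i; rewrite ffunE.
  set S := \big[_/_]_(i | _ && (i != a0)) _.
  have -> : S = 0.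
    apply: big1 => c /andP [/forallP hc ne]; exfalso; move/negP: ne; apply; apply/eqP/ffunP => i.
    rewrite ffunE; apply: val_inj => /=; have := hc i; have := m0 i; move/eqP => -> ; by rewrite leqn0 => /eqP.
  rewrite /= addr0.
  have -> : [forall j, (fun i => nat_of_ord (a0 i)) j == 0%N] by apply/forallP => i; rewrite ffunE.
  by have -> : [forall j, (fun i => (m i - a0 i)%N) j == 0%N] by apply/forallP => i; rewrite ffunE subn0.
apply: big1 => c _.
case: (boolP [forall j, (fun i => nat_of_ord (c i)) j == 0%N]) => [/forallP c0|]; last by rewrite mul0r.
case: (boolP [forall j, (fun i => (m i - c i)%N) j == 0%N]) => [/forallP c1|]; last by rewrite mulr0.
exfalso; move/negP: mn0; apply; apply/forallP => j; have := c1 j; have := c0 j.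
by move=> /= /eqP ->; rewrite subn0.
Qed.
End PSlem.

Lemma dbl0 (V : zmodType) (x : V) : x = x + x -> x = 0.
Proof. by move=> h; apply: (addrI x); rewrite addr0 -h. Qed.

Lemma charK (k : fieldType) (n : nat) (K : fieldType) (phi : ps k n -> K) :
  [pchar k] =i pred0 -> ps_alg_map phi -> forall m, (0 < m)%N -> m%:R != 0 :> K.
Proof.
move=> /pcharf0P ch [pA pM p1] m m0.
have pC0 : phi (@psC k n 0) = 0.
  by apply: dbl0; have := pA (psC 0) (psC 0); rewrite -psC_add addr0.
have pCn j : phi (@psC k n j%:R) = j%:R.
  elim: j => [|j IH]; first by rewrite pC0.
  by rewrite -addn1 !natrD psC_add pA IH -p1.
have km : (m%:R : k) != 0 by rewrite ch -lt0n.
rewrite -pCn; apply/negP => /eqP h0.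
have := pM (psC m%:R) (psC (m%:R)^-1); rewrite psC_mul mulfV // -/(@ps1 k n) p1 h0 mul0r.
move=> h; have := @oner_neq0 K; by rewrite h eqxx.
Qed.

Section Lin.
Variables (R : nzRingType) (U V W : lmodType R).
Lemma islin0 (h : U -> V) : islin h -> h 0 = 0.
Proof. by move=> hl; apply: dbl0; have := hl 1 0 0; rewrite !scale1r !addr0. Qed.
Lemma islinD (h : U -> V) : islin h -> forall a b, h (a + b) = h a + h b.
Proof. by move=> hl a b; have := hl 1 a b; rewrite !scale1r. Qed.
Lemma islinZ (h : U -> V) : islin h -> forall c a, h (c *: a) = c *: h a.
Proof. by move=> hl c a; have := hl c a 0; rewrite !addr0 (islin0 hl) addr0. Qed.
Lemma islinN (h : U -> V) : islin h -> forall a, h (- a) = - h a.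
Proof. by move=> hl a; rewrite -scaleN1r islinZ // scaleN1r. Qed.
Lemma islin_comp (h : U -> V) (g : V -> W) : islin h -> islin g -> islin (g \o h).
Proof. by move=> hl gl a u v /=; rewrite hl gl. Qed.
Lemma islin_id : islin (@id U). Proof. by []. Qed.
Lemma islin_zero : islin (fun _ : U => 0 : V). Proof. by move=> *; rewrite scaler0 addr0. Qed.
Lemma islinB (h g : U -> V) : islin h -> islin g -> islin (fun u => h u - g u).
Proof.
move=> hl gl a u v; rewrite hl gl scalerDr scalerN opprD !addrA; congr (_ + _).
by rewrite -!addrA; congr (_ + _); rewrite addrC.
Qed.
End Lin.

Section Semi.
Variables (K L : fieldType) (iota : {rmorphism K -> L}) (U : lmodType K) (V : lmodType L).
Variable g : U -> V.
Hypothesis gl : semilin iota g.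
Lemma semi0 : g 0 = 0.
Proof. by apply: dbl0; have := gl 1 0 0; rewrite rmorph1 !scale1r !addr0. Qed.
Lemma semiD a b : g (a + b) = g a + g b.
Proof. by have := gl 1 a b; rewrite rmorph1 !scale1r. Qed.
Lemma semiZ c a : g (c *: a) = iota c *: g a.
Proof. by have := gl c a 0; rewrite !addr0 semi0 addr0. Qed.
Lemma semi_sum (I : Type) (r : seq I) (F : I -> K) (G : I -> U) :
  g (\sum_(i <- r) F i *: G i) = \sum_(i <- r) iota (F i) *: g (G i).
Proof.
rewrite (big_morph g semiD semi0); apply: eq_bigr => i _; exact: semiZ.
Qed.
End Semi.

Lemma kahler_special (k : fieldType) (n : nat) (K L : fieldType) (phi : ps k n -> K)
  (iota : {rmorphism K -> L}) (M : lmodType L) (D : L -> M) :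
  kahler_der iota D -> special_der (iota \o phi) D.
Proof.
case=> h1 h2 h3; split => // [c|f]; rewrite /= h3 //.
by rewrite big1 // => i _; rewrite h3 scaler0.
Qed.

Unset Implicit Arguments.
Theorem lemmaA9 (k : fieldType) (n : nat) (K L : fieldType)
  (phi : ps k n -> K) (iota : {rmorphism K -> L})
  (OK : lmodType K) (dK : K -> OK)
  (OL : lmodType L) (dL : L -> OL)
  (OLK : lmodType L) (dLK : L -> OLK)
  (T : lmodType L) (j : OK -> T) :
  [pchar k] =i pred0 ->
  ps_alg_map phi ->
  special_universal phi dK ->
  special_universal (iota \o phi) dL ->
  kahler_universal iota dLK ->
  base_change iota j ->
  exists (u : T -> OL) (v : OL -> OLK),
    [/\ islin u, islin v,
        forall f : K, u (j (dK f)) = dL (iota f),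
        forall g : L, v (dL g) = dLK g &
        [/\ injective u,
            forall w : OL, v w = 0 <-> exists t : T, u t = w &
            forall z : OLK, exists w : OL, v w = z]].
Proof.
move=> chk phiA [dKs univK] [dLs univL] [dLKs univLK] [jsl univT].
have charL : forall m, (0 < m)%N -> m%:R != 0 :> L.
  by move=> m m0; rewrite -(rmorph_nat iota) fmorph_eq0; exact: charK chk phiA m m0.
have [dLD dLM dLC dLS] := dLs.
have [dKD dKM dKC dKS] := dKs.
pose D1 := fun f : K => (dL (iota f) : restr iota OL).
have sD1 : special_der phi D1.
  split.
  - by move=> x y; rewrite /D1 rmorphD dLD.
  - by move=> x y; rewrite /D1 rmorphM dLM.
  - by move=> c; exact: dLC c.
  - by move=> f; exact: dLS f.
have [hK [hKl hKd _]] := univK _ D1 sD1.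
have hKs : semilin iota (hK : OK -> OL) := hKl.
have [u [ul uj _]] := univT _ hK hKs.
have [v [vl vd _]] := univL _ dLK (kahler_special phi dLKs).
have DDj x y : j (dK (x + y)) = j (dK x) + j (dK y) by rewrite dKD (semiD jsl).
have DMj x y : j (dK (x * y)) = iota x *: j (dK y) + iota y *: j (dK x).
  by rewrite dKM (semiD jsl) !(semiZ jsl).
have [E [ED EM EI]] := derivation_extends charL DDj DMj.
have sE : special_der (iota \o phi) E.
  split => //.
  - by move=> c; rewrite /= EI dKC (semi0 jsl).
  - by move=> f; rewrite /= EI dKS (semi_sum jsl); apply: eq_bigr => i _; rewrite EI.
have [g [gl gd _]] := univL _ E sE.
pose Dj := fun f : K => (j (dK f) : restr iota T).
have sDj : special_der phi Dj.
  split.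
  - by move=> x y; exact: DDj.
  - by move=> x y; exact: DMj.
  - by move=> c; rewrite /Dj dKC (semi0 jsl).
  - by move=> f; rewrite /Dj dKS (semi_sum jsl).
have [h0 [_ _ uniqj]] := univK _ Dj sDj.
have jeq w : g (u (j w)) = j w.
  have l1 : islin (fun w => g (u (j w)) : restr iota T) by move=> a w1 w2 /=; rewrite jsl ul gl.
  have e1 := uniqj _ l1 (fun x => etrans (f_equal (fun z => g (u z)) erefl) (etrans (f_equal g (etrans (uj _) (hKd x))) (etrans (gd _) (EI x)))).
  have e2 := uniqj j jsl (fun _ => erefl).
  by rewrite e1 -e2.
have [h1 [_ _ uniqT]] := univT _ j jsl.
have gu t : g (u t) = t.
  have e1 := uniqT (fun t => g (u t)) (islin_comp ul gl) jeq.
  have e2 := uniqT id (@islin_id _ _) (fun _ => erefl).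
  by rewrite e1 -e2.
pose Z := fun f : K => (0 : restr iota OLK).
have sZ : special_der phi Z.
  split => //; first by move=> *; rewrite addr0.
  - by move=> *; rewrite !scaler0 addr0.
  - by move=> f; rewrite big1 // => i _; rewrite scaler0.
have [h2 [_ _ uniqZ]] := univK _ Z sZ.
have vuj w : v (u (j w)) = 0.
  have l1 : islin (fun w => v (u (j w)) : restr iota OLK) by move=> a w1 w2 /=; rewrite jsl ul vl.
  have v1 : forall x, v (u (j (dK x))) = Z x by move=> x; rewrite uj hKd /D1 vd /Z; case: dLKs.
  have e1 := uniqZ _ l1 v1.
  have l0 : islin (fun _ : OK => 0 : restr iota OLK) by move=> *; rewrite scaler0 addr0.
  have e2 := uniqZ _ l0 (fun _ => erefl).
  by rewrite e1 -e2.
have semi0' : semilin iota (fun _ : OK => 0 : OLK) by move=> *; rewrite scaler0 addr0.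
have [h3 [_ _ uniqT0]] := univT _ _ semi0'.
have vu t : v (u t) = 0.
  have e1 := uniqT0 (fun t => v (u t)) (islin_comp ul vl) vuj.
  have e2 := uniqT0 (fun _ => 0) (@islin_zero _ _ _) (fun _ => erefl).
  by rewrite e1 -e2.
pose pi := fun w => w - u (g w).
have pil : islin pi by apply: islinB; [exact: islin_id | exact: islin_comp gl ul].
have kpi : kahler_der iota (fun y => pi (dL y)).
  split.
  - by move=> x y; rewrite dLD (islinD pil).
  - by move=> x y; rewrite dLM (islinD pil) !(islinZ pil).
  - by move=> a; rewrite /pi -[dL (iota a)]/(D1 a) -hKd -uj gu subrr.
have [hh [hhl hhd _]] := univLK _ _ kpi.
have [h4 [_ _ uniqL]] := univL _ _ (kahler_special phi kpi).
have hv w : hh (v w) = pi w.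
  have e1 := uniqL (fun w => hh (v w)) (islin_comp vl hhl) (fun y => etrans (f_equal hh (vd y)) (hhd y)).
  have e2 := uniqL pi pil (fun _ => erefl).
  by rewrite e1 -e2.
have [h5 [_ _ uniqLK]] := univLK _ _ dLKs.
have vh z : v (hh z) = z.
  have v1 : forall y, v (hh (dLK y)) = dLK y.
    by move=> y; rewrite hhd /pi (islinD vl) (islinN vl) vu subr0 vd.
  have e1 := uniqLK (fun z => v (hh z)) (islin_comp hhl vl) v1.
  have e2 := uniqLK id (@islin_id _ _) (fun _ => erefl).
  by rewrite e1 -e2.
exists u, v; split => //.
  by move=> f; rewrite uj hKd.
split.
- by move=> t1 t2 e; rewrite -(gu t1) e gu.
- move=> w; split.
    move=> vw; exists (g w); have := hv w; rewrite vw (islin0 hhl) /pi => /esym /eqP.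
    by rewrite subr_eq0 => /eqP /esym.
  by move=> [t <-]; exact: vu.
- by move=> z; exists (hh z); exact: vh.
Qed.
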